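(* Let $\mathcal{F}=\langle\mathbb{A},(\mu_i)_{i\in\mathsf{Ag}}\rangle$ be an APE-structure and $\mathbb{E}=(E,(\sim_i),(P_i),\Phi,\mathsf{pre})$ a probabilistic event structure over $\mathbb{A}$. Then for every $a\in\Phi$ and every $i\in\mathsf{Ag}$, the partial map $\mu^a_i$ is an $i$-premeasure on $\mathbb{A}$. Furthermore, if $a\leq y$ then $\mu^a_i(x)=\mu^a_i(x\wedge y)$ (for $x$ in the domain of $\mu^a_i$).
   Context: Fix a set $\mathsf{Ag}$ of agents. A monadic Heyting algebra is a Heyting algebra $\mathbb{L}$ with, for each $i\in\mathsf{Ag}$, monotone unary operations $\lozenge_i,\Box_i$ such that for all $a,b$: $a\leq\lozenge_i a$; $\Box_i a\leq a$; $\lozenge_i(a\vee b)\leq\lozenge_i a\vee\lozenge_i b$; $\Box_i(a\to b)\leq\Box_i a\to\Box_i b$; $\lozenge_i a\leq\Box_i\lozenge_i a$; $\lozenge_i\Box_i a\leq\Box_i a$; $\Box_i(a\to b)\leq\lozenge_i a\to\lozenge_i b$; $\lozenge_i\bot\leq\bot$; $\top\leq\Box_i\top$. An epistemic Heyting algebra is a finite monadic Heyting algebra with $\lozenge_i a\vee\neg\lozenge_i a=\top$ for all $i,a$. An element $a$ is $i$-minimal if $a\neq\bot$, $\lozenge_i a=a$, and whenever $b<a$ and $\lozenge_i b=b$ then $b=\bot$; $\mathsf{Min}_i(\mathbb{A})$ is the set of $i$-minimal elements and $\mathsf{Min}_i(\mathbb{A}){\downarrow}$ its down-set. A partial map $\mu:\mathbb{A}\to\mathbb{R}^+$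 is an $i$-premeasure if: (1) $\mathsf{dom}(\mu)=\mathsf{Min}_i(\mathbb{A}){\downarrow}$; (2) $\mu$ is order-preserving; (3) for every $a\in\mathsf{Min}_i(\mathbb{A})$ and all $b,c\leq a$, $\mu(b\vee c)=\mu(b)+\mu(c)-\mu(b\wedge c)$; (4) $\mu(\bot)=0$ if $\mathsf{dom}(\mu)\neq\varnothing$. It is an $i$-measure if moreover (5) for every $a\in\mathsf{Min}_i(\mathbb{A})$ and all $b,c\leq a$ with $b<c$, $\mu(b)<\mu(c)$; and (6) $\mu(a)=1$ for every $a\in\mathsf{Min}_i(\mathbb{A})$. An APE-structure is a pair $\langle\mathbb{A},(\mu_i)_{i\in\mathsf{Ag}}\rangle$ with $\mathbb{A}$ an epistemic Heyting algebra and each $\mu_i$ an $i$-measure on $\mathbb{A}$. A pre-ordered multiset on a set $X$ is a multiset of elements of $X$ in which the copies $x_1,\dots,x_n$ of any element carry the linear order $x_1\prec\cdots\prec x_n$. A probabilistic event structure over $\mathbb{A}$ is a tuple $(E,(\sim_i),(P_i),\Phi,\mathsf{pre})$: $E$ non-empty finite; each $\sim_i$ an equivalence relation on $E$; each $P_i:E\to\,]0,1]$ with $\sum\{P_i(e')\mid e'\sim_i e\}=1$; $\Phi$ a finite pre-ordered multiset on $\mathbb{A}$ such that any $a,b\in\Phi$ arising from distinct elements satisfy $a\wedge b=\bot$ or $a<b$ or $b<a$; $\mathsf{pre}(\bullet\mid a)$ a probability distribution on $E$ for each $a\in\Phi$; and if $\mathsf{pre}(e\mid a)=0$ then $\mathsf{pre}(e\mid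 b)=0$ for all $b\in\Phi$ with $a<b$ (distinct elements) or $a\prec b$ (copies). For $a\in\Phi$, $\mathrm{mb}(a)$ denotes the set of maximal elements of $\Phi\cap({\downarrow}a\setminus\{a\})$, and $\mu^a_i:\mathbb{A}\to\mathbb{R}^+$ is the partial function $\mu^a_i(x):=\mu_i(x\wedge a)-\sum_{b\in\mathrm{mb}(a)}\mu_i(x\wedge b)$, defined for $x\in\mathsf{Min}_i(\mathbb{A}){\downarrow}$. *)

(* Defs.v *)
From HB Require Import structures.
From mathcomp Require Import all_boot all_order all_algebra.
From mathcomp Require Import reals.

Set Implicit Arguments.
Unset Strict Implicit.
Unset Printing Implicit Defensive.

Import Order.TTheory GRing.Theory Num.Theory.
Local Open Scope order_scope.

Section Defs.
Variables (Ag : Type) (d : Order.disp_t) (A : finTBDistrLatticeType d).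

Definition is_heyting_imp (imp : A -> A -> A) : Prop :=
  forall a b c : A, (c <= imp a b) = (c `&` a <= b).

Definition hneg (imp : A -> A -> A) (a : A) : A := imp a \bot.

Definition is_monadic_HA (imp : A -> A -> A) (dia box : Ag -> A -> A) : Prop :=
  [/\ is_heyting_imp imp,
      forall i, {homo dia i : x y / x <= y},
      forall i, {homo box i : x y / x <= y} &
      forall i (a b : A),
      (a <= dia i a) /\ (box i a <= a) /\
      (dia i (a `|` b) <= dia i a `|` dia i b) /\
      (box i (imp a b) <= imp (box i a) (box i b)) /\
      (dia i a <= box i (dia i a)) /\
      (dia i (box i a) <= box i a) /\
      (box i (imp a b) <= imp (dia i a) (dia i b)) /\
      (dia i \bot <= \bot) /\
      (\top <= box i \top)].

(* finiteness is carried by the finType structure of A *)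
Definition is_epistemic_HA (imp : A -> A -> A) (dia box : Ag -> A -> A) : Prop :=
  is_monadic_HA imp dia box /\
  forall i (a : A), dia i a `|` hneg imp (dia i a) = \top.

Definition i_minimal (dia : Ag -> A -> A) (i : Ag) (a : A) : bool :=
  [&& a != \bot, dia i a == a &
      [forall b : A, ((b < a) && (dia i b == b)) ==> (b == \bot)]].

Definition in_mindown (dia : Ag -> A -> A) (i : Ag) (x : A) : bool :=
  [exists m : A, i_minimal dia i m && (x <= m)].

Variable R : realType.
Local Open Scope ring_scope.

(* A partial map A -> R^+ with domain Min_i(A)↓ is represented by a total
   function mu : A -> R whose values outside Min_i(A)↓ are irrelevant. *)
Definition is_premeasure (dia : Ag -> A -> A) (i : Ag) (mu : A -> R) : Prop :=
  [/\ (forall x, in_mindown dia i x -> 0 <= mu x),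
      (forall x y, in_mindown dia i x -> in_mindown dia i y ->
                   (x <= y)%O -> mu x <= mu y),
      (forall a, i_minimal dia i a -> forall b c, (b <= a)%O -> (c <= a)%O ->
          mu (b `|` c)%O = mu b + mu c - mu (b `&` c)%O) &
      ((exists x, in_mindown dia i x) -> mu \bot%O = 0)].

Definition is_measure (dia : Ag -> A -> A) (i : Ag) (mu : A -> R) : Prop :=
  [/\ is_premeasure dia i mu,
      (forall a, i_minimal dia i a -> forall b c, (b <= a)%O -> (c <= a)%O ->
          (b < c)%O -> mu b < mu c) &
      (forall a, i_minimal dia i a -> mu a = 1)].

Definition is_APE_structure (imp : A -> A -> A) (dia box : Ag -> A -> A)
  (mu : Ag -> A -> R) : Prop :=
  is_epistemic_HA imp dia box /\ forall i, is_measure dia i (mu i).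

(* The finite pre-ordered multiset Phi
   is given as a sequence: its entries are the elements of the multiset, and
   copies of the same element are linearly ordered by their position in the
   sequence.  pre j is the distribution pre(. | Phi`_j). *)
Definition is_prob_event_structure (E : finType) (sim : Ag -> rel E)
  (P : Ag -> E -> R) (Phi : seq A) (pre : 'I_(size Phi) -> E -> R) : Prop :=
  [/\ (0 < #|E|)%N,
      (forall i, equivalence_rel (sim i)),
      (forall i e, 0 < P i e <= 1) &
      (forall i e, \sum_(e' | sim i e' e) P i e' = 1)] /\
  [/\ (forall j k : 'I_(size Phi), nth \bot%O Phi j != nth \bot%O Phi k ->
          [\/ (nth \bot Phi j `&` nth \bot Phi k = \bot)%O,
              (nth \bot Phi j < nth \bot Phi k)%O |
              (nth \bot Phi k < nth \bot Phi j)%O]),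
      (forall j, (forall e, 0 <= pre j e) /\ \sum_e pre j e = 1) &
      (forall (j k : 'I_(size Phi)) e, pre j e = 0 ->
          ((nth \bot Phi j < nth \bot Phi k)%O \/
           (nth \bot%O Phi j = nth \bot%O Phi k /\ (j < k)%N)) ->
          pre k e = 0)].

Definition mb (Phi : seq A) (a : A) : {set A} :=
  [set b : A | [&& b \in Phi, (b < a)%O &
     [forall c : A, ((c \in Phi) && (b < c)%O && (c < a)%O) ==> false]]].

Definition mu_sup (mu : Ag -> A -> R) (i : Ag) (Phi : seq A) (a : A) (x : A) : R :=
  mu i (x `&` a)%O - \sum_(b in mb Phi a) mu i (x `&` b)%O.

End Defs.

(* Main.v *)
Require Import Defs.
From HB Require Import structures.
From mathcomp Require Import all_boot all_order all_algebra.
From mathcomp Require Import reals.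
From mathcomp Require Import lra.
Import Order.TTheory GRing.Theory Num.Theory.

Section Aux.
Variables (d : Order.disp_t) (A : finTBDistrLatticeType d) (R : realType).
Variables (mu : A -> R) (m : A).
Hypothesis Hadd : forall b c : A, (b <= m)%O -> (c <= m)%O ->
  mu (b `|` c)%O = (mu b + mu c - mu (b `&` c)%O)%R.
Hypothesis Hbot : mu \bot%O = 0%R.

Lemma disj_join (b : A) (r : seq A) :
  (forall c, c \in r -> (b `&` c = \bot)%O) -> (b `&` \join_(c <- r) c = \bot)%O.
Proof.
elim: r => [|c r IH] H; first by rewrite big_nil meetx0.
rewrite big_cons meetUr H ?mem_head // IH ?join0x //.
by move=> c' hc'; apply: H; rewrite in_cons hc' orbT.
Qed.

Lemma sum_join (r : seq A) : uniq r ->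
  (forall b b', b \in r -> b' \in r -> b != b' -> (b `&` b' = \bot)%O) ->
  forall x, (x <= m)%O ->
  (\sum_(b <- r) mu (x `&` b)%O)%R = mu (x `&` \join_(b <- r) b)%O.
Proof.
elim: r => [|b r IH] /= Hu Hd x Hx; first by rewrite !big_nil meetx0 Hbot.
case/andP: Hu => nb ur.
rewrite !big_cons meetUr Hadd; last 2 first.
- exact: le_trans (leIl _ _) Hx.
- exact: le_trans (leIl _ _) Hx.
rewrite IH //; last first.
  by move=> b1 b2 h1 h2; apply: Hd; rewrite in_cons ?h1 ?h2 orbT.
have -> : ((x `&` b) `&` (x `&` \join_(c <- r) c) = \bot)%O.
  have Hj : (b `&` \join_(c <- r) c = \bot)%O.
    apply: disj_join => c hc; apply: Hd; rewrite ?mem_head ?in_cons ?hc ?orbT //.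
    by apply/eqP => e; rewrite e hc in nb.
  apply/eqP; rewrite -lex0; rewrite -[X in (_ <= X)%O]Hj.
  exact: leI2 (leIr _ _) (leIr _ _).
by rewrite Hbot subr0.
Qed.
End Aux.

Lemma mb_disj (d : Order.disp_t) (A : finTBDistrLatticeType d)
  (Phi : seq A) (a b c : A) :
  (forall j k : 'I_(size Phi), nth \bot%O Phi j != nth \bot%O Phi k ->
          [\/ (nth \bot Phi j `&` nth \bot Phi k = \bot)%O,
              (nth \bot Phi j < nth \bot Phi k)%O |
              (nth \bot Phi k < nth \bot Phi j)%O]) ->
  b \in mb Phi a -> c \in mb Phi a -> b != c -> (b `&` c = \bot)%O.
Proof.
move=> Hphi; rewrite !inE => /and3P [bP ba /forallP bmax] /and3P [cP ca /forallP cmax] bc.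
have jb : (index b Phi < size Phi)%N by rewrite index_mem.
have jc : (index c Phi < size Phi)%N by rewrite index_mem.
have := Hphi (Ordinal jb) (Ordinal jc); rewrite /= !nth_index //.
case/(_ bc) => [//|lt|lt].
- by move: (bmax c); rewrite cP lt ca.
- by move: (cmax b); rewrite bP lt ba.
Qed.

Theorem proposition5 (Ag : Type) (d : Order.disp_t) (A : finTBDistrLatticeType d)
  (imp : A -> A -> A) (dia box : Ag -> A -> A) (R : realType) (mu : Ag -> A -> R)
  (E : finType) (sim : Ag -> rel E) (P : Ag -> E -> R) (Phi : seq A)
  (pre : 'I_(size Phi) -> E -> R) :
  is_APE_structure imp dia box mu ->
  is_prob_event_structure sim P pre ->
  forall a : A, a \in Phi -> forall i : Ag,
    is_premeasure dia i (mu_sup mu i Phi a) /\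
    (forall x y : A, (a <= y)%O -> in_mindown dia i x ->
       mu_sup mu i Phi a x = mu_sup mu i Phi a (x `&` y)%O).
Proof.
move=> [_ Hmeas] [_ [Hphi _ _]] a _ i.
have [[Hpos Hmon Hadd Hbot0] _ _] := Hmeas i.
have indown : forall m y, i_minimal dia i m -> (y <= m)%O -> in_mindown dia i y.
  by move=> m y mm ym; apply/existsP; exists m; rewrite mm.
set S := enum (mb Phi a).
set Bj := (\join_(b <- S) b)%O.
have Bja : (Bj <= a)%O.
  apply/joinsP_seq => b; rewrite mem_enum inE => + _.
  by move => /and3P [_ /ltW].
have HS : forall x m, i_minimal dia i m -> (x <= m)%O ->
    mu_sup mu i Phi a x = (mu i (x `&` a)%O - mu i (x `&` Bj)%O)%R.
  move=> x m mm xm; rewrite /mu_sup -big_enum /= (@sum_join _ _ _ _ m) //.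
  - by move=> b c bm cm; exact: (Hadd m mm b c bm cm).
  - by apply: Hbot0; exists m; apply: indown mm _.
  - exact: enum_uniq.
  move=> b c; rewrite !mem_enum => hb hc bc; exact: (@mb_disj _ _ _ _ _ _ Hphi hb hc bc).
have getm : forall x, in_mindown dia i x -> exists2 m, i_minimal dia i m & (x <= m)%O.
  by move=> x /existsP [m /andP [mm xm]]; exists m.
split; last first.
  move=> x y ay /getm [m mm xm].
  rewrite (HS x m) // (HS (x `&` y)%O m) //; last exact: le_trans (leIl _ _) xm.
  by rewrite -!meetA (meet_idPr ay) (meet_idPr (le_trans Bja ay)).
split.
- move=> x /getm [m mm xm]; rewrite (HS x m) // subr_ge0.
  apply: Hmon; [apply: (indown m) => //; exact: le_trans (leIl _ _) xm ..|].
  exact: leI2 (lexx _) Bja.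
- move=> x y /getm [m mm xm] /getm [m' mm' ym'] xy.
  rewrite (HS x m) // (HS y m') //.
  have xm' : (x <= m')%O by exact: le_trans xy ym'.
  have e1 : mu i ((x `&` a) `|` (y `&` Bj))%O =
      (mu i (x `&` a)%O + mu i (y `&` Bj)%O - mu i (x `&` Bj)%O)%R.
    rewrite (Hadd m' mm'); last 2 first.
    + exact: le_trans (leIl _ _) xm'.
    + exact: le_trans (leIl _ _) ym'.
    by rewrite meetACA (meet_l xy) (meet_idPr Bja).
  have l1 : (mu i ((x `&` a) `|` (y `&` Bj))%O <= mu i (y `&` a)%O)%R.
    apply: Hmon.
    + apply: (indown m') => //; rewrite leUx.
      by rewrite (le_trans (leIl _ _) xm') (le_trans (leIl _ _) ym').
    + by apply: (indown m') => //; exact: le_trans (leIl _ _) ym'.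
    by rewrite leUx (leI2 xy (lexx _)) (leI2 (lexx _) Bja).
  lra.
- move=> m mm b c bm cm.
  have bcm : ((b `|` c) <= m)%O by rewrite leUx bm cm.
  have bcm' : ((b `&` c) <= m)%O by exact: le_trans (leIl _ _) bm.
  rewrite (HS _ m) // (HS b m) // (HS c m) // (HS _ m) //.
  rewrite !meetUl !(Hadd m mm); last 4 first.
  + exact: le_trans (leIl _ _) bm.
  + exact: le_trans (leIl _ _) cm.
  + exact: le_trans (leIl _ _) bm.
  + exact: le_trans (leIl _ _) cm.
  have hz : forall z, ((b `&` z) `&` (c `&` z) = (b `&` c) `&` z)%O.
    by move=> z; rewrite meetACA meetxx.
  rewrite !hz.
  lra.
- move=> [x /getm [m mm xm]].
  by rewrite (HS _ m) ?le0x // !meet0x subrr.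
Qed.
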